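(* A real symmetric $n\times n$ matrix $A$ is symmetrically tropically singular if and only if there are two cycle-distinct permutations $\sigma,\tau\in S_n$ that both realize the tropical determinant of $A$.
   Context: For a real $n\times n$ matrix $A$, its tropical determinant is $\min_{\sigma\in S_n}\sum_{i=1}^n A_{i,\sigma(i)}$, and $\sigma$ realizes it if $\sum_i A_{i,\sigma(i)}$ equals this minimum. Two permutations are cycle-similar if their disjoint cycle decompositions agree up to replacing some cycles by their inverses; otherwise they are cycle-distinct. A real symmetric $n\times n$ matrix $A$ is symmetrically tropically singular if, among the monomials $\prod_{i}X_{i,\sigma(i)}$ ($\sigma\in S_n$) in commuting variables subject to the identification $X_{i,j}=X_{j,i}$, with value $\sum_i A_{i,\sigma(i)}$, the minimum value is attained by at least two distinct monomials (distinct after the identification). *)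

(* Defs.v *)
From HB Require Import structures.
From mathcomp Require Import all_boot all_order all_fingroup all_algebra.
Set Implicit Arguments. Unset Strict Implicit. Unset Printing Implicit Defensive.
Import Order.TTheory GRing.Theory Num.Theory.
Local Open Scope ring_scope.

Section TropDefs.
Variables (R : realFieldType) (n : nat).

Definition perm_weight (A : 'M[R]_n) (s : 'S_n) : R := \sum_(i < n) A i (s i).

Definition realizes_tdet (A : 'M[R]_n) (s : 'S_n) : Prop :=
  forall t : 'S_n, perm_weight A s <= perm_weight A t.

Definition cycle_fun (s : 'S_n) (C : {set 'I_n}) : {ffun 'I_n -> 'I_n} :=
  [ffun x => if x \in C then s x else x].

Definition cycle_decomp (s : 'S_n) : {set {ffun 'I_n -> 'I_n}} :=
  [set cycle_fun s C | C in porbits s & 1 < #|C|]%N.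

(* t is obtained from s by replacing the cycles of s in S by their inverses *)
Definition cycle_similar (s t : 'S_n) : Prop :=
  exists S : {set {set 'I_n}},
    cycle_decomp t =
    [set cycle_fun (if C \in S then s^-1 else s)%g C | C in porbits s & 1 < #|C|]%N.

Definition cycle_distinct (s t : 'S_n) : Prop := ~ cycle_similar s t.

(* the monomial prod_i X_{i, s i} modulo X_{ij} = X_{ji}: the multiplicity of
   each unordered pair {i, j} (a 1- or 2-element set) *)
Definition sym_monomial (s : 'S_n) : {ffun {set 'I_n} -> nat} :=
  [ffun e => #|[set i | [set i; s i] == e]|].

Definition sym_trop_singular (A : 'M[R]_n) : Prop :=
  exists s t : 'S_n,
    [/\ realizes_tdet A s, realizes_tdet A t & sym_monomial s != sym_monomial t].

End TropDefs.

(* Main.v *)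
Set Warnings "-notation-overridden -ambiguous-paths".
Require Import Defs.
From HB Require Import structures.
From mathcomp Require Import all_boot all_order all_fingroup all_algebra.
Import Order.TTheory GRing.Theory Num.Theory.

Section Aux.
Variable n : nat.
Local Open Scope group_scope.
Implicit Types s t : 'S_n.

Definition uf s (S : {set {set 'I_n}}) x := if porbit s x \in S then s^-1 x else s x.

Lemma porbit_inv s x : porbit s (s^-1 x) = porbit s x.
Proof.
apply/esym/eqP; rewrite eq_porbit_mem.
by have := mem_porbit s 1 (s^-1 x); rewrite expg1 permKV.
Qed.

Lemma porbit_s s x : porbit s (s x) = porbit s x.
Proof. by have := porbit_perm s 1 x; rewrite expg1. Qed.

Lemma pw_mono s t S : (forall x, t x = uf s S x) -> sym_monomial s = sym_monomial t.
Proof.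
move=> Ht; apply/ffunP => e; rewrite !ffunE.
pose phi x := if porbit s x \in S then s^-1 x else x.
have phiinj : injective phi.
  move=> x y; rewrite /phi.
  case Hx: (porbit s x \in S); case Hy: (porbit s y \in S).
  - exact: perm_inj.
  - by move=> E; move: Hx; rewrite -porbit_inv E Hy.
  - by move=> E; move: Hy; rewrite -porbit_inv -E Hx.
  - by [].
rewrite -(card_preimset _ phiinj); apply: eq_card => i.
rewrite !inE; congr (_ == e).
rewrite Ht /uf /phi; case: (porbit s i \in S) => //.
by rewrite permKV setUC.
Qed.

Lemma sim_pw s t : cycle_similar s t -> exists S, forall x, t x = uf s S x.
Proof.
case=> S HS; exists S => x.
case: (eqVneq (t x) x) => Htx.
- rewrite Htx; apply/eqP; apply/negPn/negP => Hu.
  have sx : s x != x.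
    apply: contraNneq Hu; rewrite /uf => sxx.
    have sinv : s^-1 x = x by rewrite -{1}sxx permK.
    by case: ifP => _; rewrite ?sinv ?sxx.
  have Hin : cycle_fun (if porbit s x \in S then s^-1 else s) (porbit s x)
              \in cycle_decomp t.
    rewrite HS; apply/imsetP; exists (porbit s x) => //.
    rewrite !inE imset_f //=; apply/card_gt1P; exists x, (s x).
    by rewrite porbit_id eq_sym sx; have := mem_porbit s 1 x; rewrite expg1.
  case/imsetP: Hin => C; rewrite inE => /andP[_ _] Hf.
  have := congr1 (fun f : {ffun 'I_n -> 'I_n} => f x) Hf; rewrite !ffunE porbit_id Htx.
  rewrite /uf in Hu; case: ifP Hu => _ Hu /=; case: ifP => _ E; by rewrite E eqxx in Hu.
- have Hin : cycle_fun t (porbit t x) \in cycle_decomp t.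
    apply/imsetP; exists (porbit t x) => //.
    rewrite !inE imset_f //=; apply/card_gt1P; exists x, (t x).
    by rewrite porbit_id eq_sym Htx; have := mem_porbit t 1 x; rewrite expg1.
  rewrite HS in Hin; case/imsetP: Hin => C; rewrite !inE => /andP[/imsetP[y _ ->] _] Hf.
  have := congr1 (fun f : {ffun 'I_n -> 'I_n} => f x) Hf; rewrite !ffunE porbit_id.
  case: ifP => xC; last by move=> E; rewrite E eqxx in Htx.
  move=> ->.
  have Ey : porbit s x = porbit s y by apply/eqP; rewrite eq_porbit_mem.
  by rewrite /uf Ey; case: ifP.
Qed.

Lemma pw_sim s t S : (forall x, t x = uf s S x) -> cycle_similar s t.
Proof.
move=> Ht; exists S.
have Horb : forall x, porbit t x = porbit s x.
  move=> x; pose g := if porbit s x \in S then s^-1 else s.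
  have Hg : forall y, y \in porbit s x -> t y = g y.
    move=> y yx; have Ey : porbit s y = porbit s x by apply/eqP; rewrite eq_porbit_mem.
    by rewrite Ht /uf /g Ey; case: ifP.
  have Pg : porbit g x = porbit s x by rewrite /g; case: ifP => // _; rewrite porbitV.
  have Hi : forall i, (t ^+ i) x = (g ^+ i) x.
    elim=> [|i IH]; first by rewrite !expg0.
    rewrite !expgSr !permM IH Hg // -Pg; exact: mem_porbit.
  rewrite -Pg; apply/porbit_setP => y.
  by apply/porbitP/porbitP => -[i ->]; exists i; rewrite Hi.
have Hps : porbits t = porbits s by apply: eq_imset.
rewrite /cycle_decomp Hps; apply: eq_in_imset => C; rewrite inE => /andP[/imsetP[x _ ->] _].
apply/ffunP => y; rewrite !ffunE; case: ifP => // yx.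
have Ey : porbit s y = porbit s x by apply/eqP; rewrite eq_porbit_mem.
by rewrite Ht /uf Ey; case: ifP.
Qed.

Lemma mono_pw s t : sym_monomial s = sym_monomial t -> exists S, forall x, t x = uf s S x.
Proof.
move=> Hm.
have cnt : forall u (e : {set 'I_n}), sym_monomial u e = #|[set i | [set i; u i] == e]|.
  by move=> u e; rewrite ffunE.
have tS : forall x, t x = s x \/ t x = s^-1 x.
  move=> x.
  have : 0 < sym_monomial t [set x; t x].
    by rewrite cnt card_gt0; apply/set0Pn; exists x; rewrite inE.
  rewrite -Hm cnt card_gt0 => /set0Pn[i]; rewrite inE => /eqP Hi.
  have xi : x \in [set i; s i] by rewrite Hi set21.
  have txi : t x \in [set i; s i] by rewrite Hi set22.
  rewrite !in_set2 in xi txi.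
  case/orP: xi => /eqP xE.
  - subst x; case/orP: txi => /eqP Et; last by left.
    left; have : s i \in [set i; t i] by rewrite -Hi set22.
    by rewrite Et in_set2 orbb => /eqP ->.
  - have iE : i = s^-1 x by rewrite xE permK.
    case/orP: txi => /eqP Et; first by right; rewrite Et iE.
    right; rewrite Et -xE; have : i \in [set x; t x] by rewrite -Hi set21.
    by rewrite Et -xE in_set2 orbb => /eqP ii; rewrite -iE ii.
have prop : forall z, t z = s z -> s (s z) != z -> t (s z) = s (s z).
  move=> z tz ssz; case: (tS (s z)) => // Ht; rewrite permK in Ht.
  have zsz : z != s z by apply: contraNneq ssz => E; rewrite -!E.
  have c1 : 2 <= #|[set i | [set i; t i] == [set z; s z]]|.
    have := subset_leq_card (A := [set z; s z]) (B := [set i | [set i; t i] == [set z; s z]]).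
    rewrite cards2 zsz; apply; apply/subsetP => i; rewrite in_set2 inE => /orP[]/eqP->.
      by rewrite tz.
    by rewrite Ht setUC.
  have c2 : #|[set i | [set i; s i] == [set z; s z]]| <= 1.
    rewrite -(cards1 z); apply: subset_leq_card; apply/subsetP => i; rewrite !inE => /eqP Hi.
    have : i \in [set z; s z] by rewrite -Hi set21.
    rewrite in_set2 => /orP[]// /eqP iE.
    have : s i \in [set z; s z] by rewrite -Hi set22.
    rewrite in_set2 iE => /orP[]/eqP E.
      by rewrite E eqxx in ssz.
    by move/perm_inj: E => E; rewrite E eqxx in zsz.
  move: c1; rewrite -cnt -Hm cnt => c1.
  by have := leq_trans c1 c2.
have iter : forall x, t x = s x -> s (s x) != x -> forall k, t ((s^+k) x) = s ((s^+k) x).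
  move=> x tx ssx; elim=> [|k IH]; first by rewrite expg0 perm1.
  have -> : (s^+k.+1) x = s ((s^+k) x) by rewrite expgSr permM.
  apply: prop => //.
  have E : s (s ((s^+k) x)) = (s^+k) (s (s x)).
    have E1 : s (s ((s^+k) x)) = (s^+k.+2) x by rewrite !expgSr !permM.
    have E2 : (s^+k) (s (s x)) = (s^+k.+2) x by rewrite !expgS !permM.
    by rewrite E1 E2.
  by rewrite E; apply: contra ssx => /eqP /perm_inj ->.
exists [set C in porbits s | [exists y in C, t y != s y]] => x.
rewrite /uf inE imset_f //=.
case: ifP => [/existsP[y /andP[yx ty]] | /negbT Hn].
- case: (tS x) => [tx|->//].
  case: (eqVneq (s (s x)) x) => ssx.
    by rewrite tx; apply: (@perm_inj _ s); rewrite permKV.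
  by case/porbitP: yx => k yE; rewrite yE (iter x tx ssx k) eqxx in ty.
- by apply/eqP; apply: contraNT Hn => Hne; apply/existsP; exists x; rewrite porbit_id Hne.
Qed.
End Aux.

Local Open Scope ring_scope.

Theorem proposition1 (R : realFieldType) (n : nat) (A : 'M[R]_n) :
  A^T = A ->
  (sym_trop_singular A <->
   exists s t : 'S_n,
     [/\ realizes_tdet A s, realizes_tdet A t & cycle_distinct s t]).
Proof.
move=> _; split.
- case=> s [t [Hs Ht Hm]]; exists s, t; split => // Hsim.
  case: (@sim_pw n s t Hsim) => S HS.
  by rewrite (@pw_mono n s t S HS) eqxx in Hm.
- case=> s [t [Hs Ht Hd]]; exists s, t; split => //.
  apply/eqP => Hm; apply: Hd.
  case: (@mono_pw n s t Hm) => S HS; exact: (@pw_sim n s t S HS).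
Qed.
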